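(* Let $\mathbf{k}$ be a field and $\underline{R}$ a finitely generated commutative algebra object in the category of polynomial functors over $\mathbf{k}$. Let $I$ be a $\mathrm{GL}$-stable radical ideal of $R$. Then for every $n$ the image of $I$ under the surjection $R\to R_n$ is a radical ideal of $R_n$.
   Context: A polynomial functor over $\mathbf{k}$ is an endofunctor of $\mathbf{k}$-vector spaces that is a subquotient of a finite direct sum of tensor power functors. Put $R_n=\underline{R}(\mathbf{k}^n)$; the standard inclusions $\mathbf{k}^n\to\mathbf{k}^{n+1}$ induce $R_n\to R_{n+1}$ and $R=\varinjlim R_n$. For $m\ge n$ the standard projection $\mathbf{k}^m\to\mathbf{k}^n$ induces $R_m\to R_n$; these are compatible and define a surjection $R\to R_n$ (whose composite with $R_n\to R$ is the identity). $\mathrm{GL}=\bigcup_n\mathrm{GL}_n$ acts on $R$. *)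

(* Defs.v *)
From HB Require Import structures.
From mathcomp Require Import all_boot all_order all_algebra.
Set Implicit Arguments. Unset Strict Implicit. Unset Printing Implicit Defensive.
Import Order.TTheory GRing.Theory Num.Theory.
Local Open Scope ring_scope.

Section Defs.
Variable k : fieldType.

(* Index set of the basis of  T^{d_1}(k^n) (+) ... (+) T^{d_r}(k^n),  ds = [d_1;...;d_r] :
   pairs (i, f) with i a summand and f : 'I_{d_i} -> 'I_n a pure tensor of basis vectors. *)
Definition tensor_idx (ds : seq nat) (n : nat) (i : 'I_(size ds)) : finType :=
  {ffun 'I_(seq.nth 0%N ds i) -> 'I_n}.
Arguments tensor_idx : clear implicits.
Definition Idx (ds : seq nat) (n : nat) : finType := {i : 'I_(size ds) & tensor_idx ds n i}.

Definition Amb (ds : seq nat) (n : nat) : lmodType k := {ffun Idx ds n -> k^o}.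

(* Action of a linear map A : k^n -> k^m (column convention) on the direct sum of
   tensor powers: e_g |-> sum_f (prod_t A (f t) (g t)) e_f  on each summand. *)
Definition tensor_act (ds : seq nat) (m n : nat) (A : 'M[k]_(m, n)) (v : Amb ds n)
  : Amb ds m :=
  [ffun x : Idx ds m =>
     \sum_(g : tensor_idx ds n (tag x))
        (\prod_(t < seq.nth 0%N ds (tag x)) A (tagged x t) (g t)) *
        v (Tagged (tensor_idx ds n) g)].

Definition subspace (V : lmodType k) (S : V -> Prop) : Prop :=
  S 0 /\ forall (a : k) (u v : V), S u -> S v -> S (a *: u + v).

Definition subfunctor (ds : seq nat) (U : forall n, Amb ds n -> Prop) : Prop :=
  (forall n, subspace (U n)) /\
  (forall m n (A : 'M[k]_(m, n)) (v : Amb ds n), U n v -> U m (tensor_act A v)).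

(* A commutative k-algebra is a commutative ring A (possibly the zero ring) with a
   structure ring morphism  emb : k -> A. *)
Definition is_structure_map (A : comPzRingType) (emb : k -> A) : Prop :=
  [/\ emb 1 = 1, (forall a b, emb (a + b) = emb a + emb b) & (forall a b, emb (a * b) = emb a * emb b)].

Definition subalgebra (A : comPzRingType) (emb : k -> A) (S : A -> Prop) : Prop :=
  [/\ (forall a, S (emb a)), (forall x y, S x -> S y -> S (x + y))
    & (forall x y, S x -> S y -> S (x * y))].

Definition alg_generated (A : comPzRingType) (emb : k -> A) (G : A -> Prop) : Prop :=
  forall S : A -> Prop, subalgebra emb S -> (forall x, G x -> S x) -> forall x, S x.

Definition ideal (A : comPzRingType) (S : A -> Prop) : Prop :=
  [/\ S 0, (forall x y, S x -> S y -> S (x + y)) & (forall r x, S x -> S (r * x))].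

Definition radical (A : comPzRingType) (S : A -> Prop) : Prop :=
  forall (x : A) (e : nat), S (x ^+ e.+1) -> S x.

(* The standard map k^m -> k^n (inclusion if m <= n, projection if m >= n). *)
Definition stdmx (n m : nat) : 'M[k]_(n, m) := \matrix_(i < n, j < m) ((i == j :> nat)%:R).

Section AlgObj.
(* A commutative algebra object, given by its values R n = R(k^n) on the skeleton
   {k^n} of finite-dimensional spaces, and Rmap m n A = R(A) : R n -> R m. *)
Variable R : nat -> comPzRingType.
Variable emb : forall n, k -> R n.
Variable Rmap : forall m n : nat, 'M[k]_(m, n) -> R n -> R m.

Definition is_alg_functor : Prop :=
  [/\ (forall n, is_structure_map (emb n)), (forall n (x : R n), Rmap 1%:M x = x),
      (forall m n p (A : 'M[k]_(m, n)) (B : 'M[k]_(n, p)) (x : R p),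
          Rmap (A *m B) x = Rmap A (Rmap B x)) &
      (forall m n (A : 'M[k]_(m, n)),
          [/\ Rmap A 1 = 1,
              (forall x y, Rmap A (x + y) = Rmap A x + Rmap A y),
              (forall x y, Rmap A (x * y) = Rmap A x * Rmap A y) &
              (forall (a : k), Rmap A (emb n a) = emb m a)])].

(* R is a finitely generated commutative algebra object in polynomial functors:
   there is a polynomial functor P = U2/U1 (a subquotient of a finite direct sum of
   tensor powers) and a natural linear map P -> R whose image generates R(k^n) as a
   k-algebra for every n (i.e. Sym(P) -> R is surjective). *)
Definition fg_poly_alg : Prop :=
  is_alg_functor /\
  exists (ds : seq nat) (U1 U2 : forall n, Amb ds n -> Prop)
         (phi : forall n, Amb ds n -> R n),
    [/\ subfunctor U1, subfunctor U2 & (forall n v, U1 n v -> U2 n v)] /\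
    [/\ (forall n (a : k) (u v : Amb ds n), phi n (a *: u + v) = emb n a * phi n u + phi n v),
        (forall n v, U1 n v -> phi n v = 0),
        (forall m n (A : 'M[k]_(m, n)) v, U2 n v -> phi m (tensor_act A v) = Rmap A (phi n v))
      & (forall n, alg_generated (emb n) (fun y : R n => exists v, U2 n v /\ y = phi n v))].

(* An ideal I of R = colim R n, described by its preimages I m in R m. *)
Definition colim_ideal (I : forall m, R m -> Prop) : Prop :=
  (forall m, ideal (I m)) /\
  (forall m (x : R m), I m x <-> I m.+1 (Rmap (stdmx m.+1 m) x)).

(* GL = union of the GL_m is acting on R; stability of I. *)
Definition GL_stable (I : forall m, R m -> Prop) : Prop :=
  forall m (g : 'M[k]_m) (x : R m), g \in unitmx -> I m x -> I m (Rmap g x).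

Definition proj_image (I : forall m, R m -> Prop) (n : nat) : R n -> Prop :=
  fun y => exists m (x : R m), (n <= m)%N /\ I m x /\ y = Rmap (stdmx n m) x.

End AlgObj.
End Defs.

Arguments proj_image {k R} Rmap I n _.

(* Main.v *)
Require Import Defs.
From HB Require Import structures.
From mathcomp Require Import all_boot all_order all_algebra.
From mathcomp Require Import zify.
Set Implicit Arguments. Unset Strict Implicit. Unset Printing Implicit Defensive.
Import Order.TTheory GRing.Theory Num.Theory.
Local Open Scope ring_scope.


Section Hdeg.
Variable s : nat.
Notation ST := {set 'I_s}.

Definition hdeg (V : nmodType) (D : nat) (h : ST -> V) : Prop :=
  exists a : ST -> V, (forall T : ST, (D < #|T|)%N -> a T = 0) /\
    (forall S, h S = \sum_(T : ST | T \subset S) a T).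

Lemma sum_ifeq (V : nmodType) (I : finType) (P : pred I) (U : I) (y : V) :
  \sum_(T | P T) (if T == U then y else 0) = if P U then y else 0.
Proof.
case: (boolP (P U)) => PU.
  rewrite (bigD1 U) //= eqxx big1 ?addr0 // => T /andP[_ /negbTE ->] //.
rewrite big1 // => T PT; case: eqP => // eTU; by rewrite -eTU PT in PU.
Qed.

Lemma hdeg_ext (V : nmodType) D (h h' : ST -> V) :
  (forall S, h S = h' S) -> hdeg D h -> hdeg D h'.
Proof. by move=> e [a [Ha Hs]]; exists a; split=> // S; rewrite -e. Qed.

Lemma hdeg_mono (V : nmodType) D D' (h : ST -> V) :
  (D <= D')%N -> hdeg D h -> hdeg D' h.
Proof.
move=> le [a [Ha Hs]]; exists a; split=> // T lt; apply: Ha.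
exact: leq_ltn_trans lt.
Qed.

Lemma hdeg_const (V : nmodType) (c : V) : hdeg 0 (fun _ => c).
Proof.
exists (fun T => if T == set0 then c else 0); split.
  by move=> T; case: eqP => // ->; rewrite cards0.
by move=> S; rewrite sum_ifeq sub0set.
Qed.

Lemma hdeg_ind (V : nmodType) (i : 'I_s) (y : V) :
  hdeg 1 (fun S => if i \in S then y else 0).
Proof.
exists (fun T => if T == [set i] then y else 0); split.
  by move=> T; case: eqP => // ->; rewrite cards1.
by move=> S; rewrite sum_ifeq sub1set.
Qed.

Lemma hdeg_add (V : nmodType) D (h1 h2 : ST -> V) :
  hdeg D h1 -> hdeg D h2 -> hdeg D (fun S => h1 S + h2 S).
Proof.
move=> [a1 [H1 S1]] [a2 [H2 S2]]; exists (fun T => a1 T + a2 T); split.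
  by move=> T lt; rewrite H1 // H2 // addr0.
by move=> S; rewrite S1 S2 big_split.
Qed.

Lemma hdeg_sum (V : nmodType) D (I : finType) (F : I -> ST -> V) :
  (forall j, hdeg D (F j)) -> hdeg D (fun S => \sum_j F j S).
Proof.
move=> H; have [a Ha] := fin_all_exists H.
exists (fun T => \sum_j a j T); split.
  by move=> T lt; rewrite big1 // => j _; case: (Ha j) => -> .
move=> S; rewrite exchange_big /=; apply: eq_bigr => j _.
by case: (Ha j) => _ ->.
Qed.

Lemma hdeg_ffun (V : nmodType) D (I : finType) (h : ST -> {ffun I -> V}) :
  (forall x, hdeg D (fun S => h S x)) -> hdeg D h.
Proof.
move=> H; have [a Ha] := fin_all_exists H.
exists (fun T => [ffun x => a x T]); split.
  by move=> T lt; apply/ffunP => x; rewrite !ffunE; case: (Ha x) => ->.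
move=> S; apply/ffunP => x; rewrite sum_ffunE; case: (Ha x) => _ ->.
by apply: eq_bigr => T _; rewrite ffunE.
Qed.

Lemma hdeg_map (U V : nmodType) D (f : U -> V) (h : ST -> U) :
  f 0 = 0 -> (forall x y, f (x + y) = f x + f y) ->
  hdeg D h -> hdeg D (fun S => f (h S)).
Proof.
move=> f0 fD [a [Ha Hs]]; exists (fun T => f (a T)); split.
  by move=> T lt; rewrite Ha.
by move=> S; rewrite Hs (big_morph f fD f0).
Qed.

Lemma hdeg_mul (V : pzSemiRingType) D1 D2 (h1 h2 : ST -> V) :
  hdeg D1 h1 -> hdeg D2 h2 -> hdeg (D1 + D2) (fun S => h1 S * h2 S).
Proof.
move=> [a1 [H1 S1]] [a2 [H2 S2]].
exists (fun T => \sum_(p : ST * ST | p.1 :|: p.2 == T) a1 p.1 * a2 p.2); split.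
  move=> T lt; rewrite big1 // => p /eqP eT.
  have : (D1 + D2 < #|p.1| + #|p.2|)%N.
    by apply: (leq_trans lt); rewrite -eT leq_card_setU.
  case: (ltnP D1 #|p.1|) => [l1 _|l1 l2]; first by rewrite H1 // mul0r.
  rewrite H2 ?mulr0 //; rewrite -(ltn_add2l D1); apply: (leq_trans l2).
  by rewrite leq_add2r.
move=> S; rewrite S1 S2 mulr_suml.
under eq_bigr do rewrite mulr_sumr.
rewrite pair_big /=.
rewrite (partition_big (fun p : ST * ST => p.1 :|: p.2) (fun T => T \subset S)) /=.
  apply: eq_bigr => T TS; apply: eq_bigl => p.
  case E: (p.1 :|: p.2 == T); rewrite ?andbF //.
  by move/eqP: E => E; rewrite -subUset E TS.
by move=> p; rewrite subUset.
Qed.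

Lemma hdeg_prod (V : pzSemiRingType) d (F : 'I_d -> ST -> V) :
  (forall t, hdeg 1 (F t)) -> hdeg d (fun S => \prod_(t < d) F t S).
Proof.
elim: d F => [|d IH] F H.
  by apply: hdeg_ext (hdeg_const 1) => S; rewrite big_ord0.
have := hdeg_mul (IH (fun t => F (widen_ord (leqnSn d) t)) (fun t => H _)) (H ord_max).
rewrite addn1; apply: hdeg_ext => S; by rewrite big_ord_recr.
Qed.

Definition wsgn (V : pzRingType) (S : ST) : V := \prod_(i : 'I_s) (if i \in S then -1 else 1).

Lemma hdeg_alt (V : comPzRingType) D (h : ST -> V) :
  (D < s)%N -> hdeg D h -> \sum_(S : ST) wsgn V S * h S = 0.
Proof.
move=> Ds [a [Ha Hs]].
under eq_bigr do rewrite Hs mulr_sumr big_mkcond /=.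
rewrite exchange_big /= big1 // => T _.
case: (ltnP D #|T|) => [lt|le].
  by rewrite big1 // => S _; rewrite Ha // mulr0 if_same.
have /subsetPn [i _ iT] : ~~ ([set: 'I_s] \subset T).
  apply/negP => sub; have := subset_leq_card sub; rewrite cardsT card_ord => l2.
  by move: (leq_ltn_trans (leq_trans l2 le) Ds); rewrite ltnn.
transitivity (\sum_(S : ST) (\prod_(j : 'I_s) (if j \in S then -1 else (j \notin T)%:R)) * a T).
  apply: eq_bigr => S _; case: (boolP (T \subset S)) => TS.
    rewrite /wsgn; congr (_ * _); apply: eq_bigr => j _.
    case jS: (j \in S) => //; case jT: (j \in T) => //.
    by move: (subsetP TS j jT); rewrite jS.
  case/subsetPn: TS => j jT jS.
  rewrite (@bigD1 _ _ _ _ j) //= (negbTE jS) jT /= mul0r mul0r //.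
rewrite -mulr_suml.
have -> : \sum_(S : ST) \prod_j (if j \in S then -1 else (j \notin T)%:R) =
   \prod_(j : 'I_s) (-1 + (j \notin T)%:R) :> V.
  by rewrite (bigA_distr _ _ (fun _ => -1) (fun j => (j \notin T)%:R)).
by rewrite (bigD1 i) //= iT /= addNr mul0r mul0r.
Qed.
End Hdeg.


Lemma stdmx_mulE (k : fieldType) a b c :
  stdmx k a b *m stdmx k b c = \matrix_(i < a, j < c) (((i : nat) == j) && (i < b)%N)%:R.
Proof.
apply/matrixP => i j; rewrite !mxE.
case: (ltnP i b) => ib.
  rewrite (bigD1 (Ordinal ib)) //= !mxE eqxx mul1r big1 ?addr0 ?andbT //.
  move=> l ne; rewrite !mxE.
  have -> : ((i : nat) == l) = false.
    apply/negbTE; rewrite eq_sym; apply: contra ne => /eqP e; apply/eqP/val_inj.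
    by rewrite /= e.
  by rewrite mul0r.
rewrite andbF big1 // => l _; rewrite !mxE.
have -> : ((i : nat) == l) = false.
  by apply/negbTE; apply/eqP => e; move: (ltn_ord l); rewrite -e ltnNge ib.
by rewrite mul0r.
Qed.

Lemma stdmx_mul (k : fieldType) a b c : (minn a c <= b)%N ->
  stdmx k a b *m stdmx k b c = stdmx k a c.
Proof.
move=> le; rewrite stdmx_mulE; apply/matrixP => i j; rewrite !mxE.
case E: ((i : nat) == j) => //=.
have -> // : (i < b)%N.
apply: leq_trans le; rewrite leq_min ltn_ord /=.
by move/eqP: E => ->; rewrite ltn_ord.
Qed.

Lemma stdmx1 (k : fieldType) n : stdmx k n n = 1%:M.
Proof. by apply/matrixP => i j; rewrite !mxE. Qed.
Lemma sum_delta (k : fieldType) n (F : 'I_n -> k) j :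
  \sum_c F c * ((c == j)%:R) = F j.
Proof.
rewrite (bigD1 j) //= eqxx mulr1 big1 ?addr0 // => c /negbTE ->.
by rewrite mulr0.
Qed.

Section Mx.
Variables (k : fieldType) (m s : nat) (S : {set 'I_s}) (i0 : 'I_s).
Hypothesis i0S : i0 \in S.
Notation N := (m.+1 + s)%N.
Let q : 'I_N := lshift s (@ord_max m).
Let p : 'I_N := rshift m.+1 i0.

Definition fmx (i : 'I_s) : 'M[k]_(N, m.+1) :=
  \matrix_(a, b) ((a == rshift m.+1 i) && (b == ord_max))%:R.

Definition Gmx : 'M[k]_N := \matrix_(a, c)
  (if c == q then \sum_(i in S) (a == rshift m.+1 i)%:R
   else if c == p then (a == q)%:R else (a == c)%:R).

Definition Hmx : 'M[k]_N := \matrix_(c, b)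
  (if b == q then (c == p)%:R
   else if b == p then (c == q)%:R - \sum_(i in S | i != i0) (c == rshift m.+1 i)%:R
   else (c == b)%:R).

Lemma qp : (q == p) = false.
Proof. apply/negbTE/eqP => e; have := congr1 val e; rewrite /= => e2.
lia.
Qed.

Lemma pq : (p == q) = false.
Proof. by rewrite eq_sym qp. Qed.

Lemma rq i : (rshift m.+1 i == q) = false.
Proof. apply/negbTE/eqP => e; have := congr1 val e; rewrite /= => e2.
lia.
Qed.

Lemma rp i : (rshift m.+1 i == p) = (i == i0).
Proof.
apply/eqP/eqP => [e|->] //; exact: (rshift_inj e).
Qed.

Lemma GH : Gmx *m Hmx = 1%:M.
Proof.
apply/matrixP => a b; rewrite !mxE.
under eq_bigr do rewrite [X in _ * X]mxE.
case: (eqVneq b q) => [->|bq].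
  by rewrite sum_delta mxE pq eqxx.
case: (eqVneq b p) => [->|bp].
  under eq_bigr do rewrite mulrBr.
  rewrite sumrB sum_delta mxE eqxx.
  under [X in _ - X]eq_bigr do rewrite mulr_sumr.
  rewrite exchange_big /=.
  under [X in _ - X]eq_bigr => i Hi do rewrite sum_delta mxE rq rp (negbTE (proj2 (andP Hi))).
  by rewrite (bigD1 i0) //= addrK.
  under eq_bigr do idtac.
rewrite sum_delta mxE (negbTE bq) (negbTE bp) //.
Qed.

Lemma GS : Gmx *m stdmx k N m.+1 = stdmx k N m *m stdmx k m m.+1 + \sum_(i in S) fmx i.
Proof.
apply/matrixP => a b; rewrite stdmx_mulE !mxE summxE.
have e : forall c : 'I_N, ((c : nat) == b) = (c == lshift s b) by [].
under eq_bigr do rewrite /stdmx [X in _ * X]mxE e.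
rewrite sum_delta !mxE.
case: (eqVneq b ord_max) => [->|bm].
  rewrite eqxx; under [X in _ = _ + X]eq_bigr do rewrite /fmx mxE eqxx andbT.
  have -> : (((a : nat) == @ord_max m) && (a < m)%N) = false.
    by case: eqP => //= ->; rewrite ltnn.
  by rewrite add0r.
have -> : (lshift s b == q) = false.
  by apply/negbTE; apply: contra bm => /eqP /lshift_inj ->.
have -> : (lshift s b == p) = false.
  apply/negbTE/eqP => e2; have := congr1 val e2; rewrite /= => e3.
  by move: (ltn_ord b); rewrite e3 ltnNge leq_addr.
rewrite big1 ?addr0; last by move=> i _; rewrite /fmx mxE (negbTE bm) andbF.
have bm' : (b < m)%N.
  by move: (ltn_ord b); rewrite ltnS leq_eqVlt; case/orP => // /eqP e3; case/eqP: bm; apply: val_inj.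
rewrite e; case: eqP => [ea|]; last by [].
by rewrite /= (_ : (a < m)%N) // ea.
Qed.

Lemma G_unit : Gmx \in unitmx.
Proof. by case: (mulmx1_unit GH). Qed.
End Mx.

Section Main.
Variables (k : fieldType) (R : nat -> comPzRingType)
  (Rmap : forall m n : nat, 'M[k]_(m, n) -> R n -> R m) (I : forall m, R m -> Prop).
Arguments I : clear implicits.
Hypothesis HR1 : forall n (x : R n), Rmap 1%:M x = x.
Hypothesis HRM : forall m n p (A : 'M[k]_(m, n)) (B : 'M[k]_(n, p)) (x : R p),
  Rmap (A *m B) x = Rmap A (Rmap B x).
Hypothesis Iid : forall m, ideal (I m).
Hypothesis Icol : forall m (x : R m), I m x <-> I m.+1 (Rmap (stdmx k m.+1 m) x).
Hypothesis IGL : GL_stable Rmap I.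
Hypothesis Hdeg : forall m (x : R m), exists D, forall N s (C : 'M[k]_(N, m))
  (f : 'I_s -> 'M[k]_(N, m)),
  @hdeg s (R N) D (fun S => Rmap (C + \sum_(i in S) f i) x).

Lemma colim_up n m (y : R n) : (n <= m)%N -> I n y <-> I m (Rmap (stdmx k m n) y).
Proof.
elim: m => [|m IH] le.
  by move: le; rewrite leqn0 => /eqP e; subst n; rewrite stdmx1 HR1.
move: le; rewrite leq_eqVlt => /orP [/eqP e | lt].
  by subst n; rewrite stdmx1 HR1.
rewrite (IH lt) Icol -HRM stdmx_mul //.
by move: lt; rewrite ltnS => lt; lia.
Qed.

Lemma I_sum m (J : finType) (P : pred J) (F : J -> R m) :
  (forall j, P j -> I m (F j)) -> I m (\sum_(j | P j) F j).
Proof. by case: (Iid m) => I0 ID _ H; apply: big_ind. Qed.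

Lemma K1 m (x : R m.+1) : I m.+1 x -> I m (Rmap (stdmx k m m.+1) x).
Proof.
move=> Ix; have [D HD] := Hdeg x.
pose s := D.+1.
pose C := stdmx k (m.+1 + s) m *m stdmx k m m.+1.
pose h := fun S : {set 'I_s} => Rmap (C + \sum_(i in S) fmx k m i) x.
have Halt : \sum_(S : {set 'I_s}) wsgn (R (m.+1 + s)) S * h S = 0.
  exact: (hdeg_alt (ltnSn D) (HD _ s C (@fmx k m s))).
have Hne : forall S : {set 'I_s}, S != set0 -> I _ (h S).
  move=> S /set0Pn [i0 i0S].
  rewrite /h /C -(GS k m S i0) HRM; apply: IGL; first exact: (G_unit k m i0S).
  by apply/(colim_up x (leq_addr _ _)).
have H0 : I _ (h set0).
  move: Halt; rewrite (bigD1 set0) //=.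
  have -> : wsgn (R (m.+1 + s)) (set0 : {set 'I_s}) = 1.
    by rewrite /wsgn big1 // => i _; rewrite in_set0.
  rewrite mul1r => /eqP; rewrite addr_eq0 => /eqP ->.
  rewrite -sumrN; apply: I_sum => S SN; rewrite -mulNr.
  case: (Iid (m.+1 + s)) => _ _ Im; apply: Im; exact: Hne.
move: H0; rewrite /h big_set0 addr0 /C HRM.
by move/(colim_up _ (leq_trans (leqnSn m) (leq_addr s m.+1))).
Qed.

Lemma Kproj n m (x : R m) : (n <= m)%N -> I m x -> I n (Rmap (stdmx k n m) x).
Proof.
elim: m x => [|m IH] x le Ix.
  by move: le; rewrite leqn0 => /eqP e; subst n; rewrite stdmx1 HR1.
move: le; rewrite leq_eqVlt => /orP [/eqP e | lt].
  by subst n; rewrite stdmx1 HR1.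
have := IH _ lt (K1 Ix); rewrite -HRM stdmx_mul //.
by move: lt; rewrite ltnS => lt; lia.
Qed.

Lemma proj_imageE n (y : R n) : proj_image Rmap I n y <-> I n y.
Proof.
split.
  by case=> m [x [le [Ix ->]]]; apply: Kproj.
by move=> Iy; exists n, y; split=> //; split=> //; rewrite stdmx1 HR1.
Qed.
End Main.

Section Deg.
Variables (k : fieldType) (R : nat -> comPzRingType) (emb : forall n, k -> R n)
  (Rmap : forall m n : nat, 'M[k]_(m, n) -> R n -> R m) (ds : seq nat)
  (U2 : forall n, Amb k ds n -> Prop) (phi : forall n, Amb k ds n -> R n).
Arguments emb : clear implicits. Arguments U2 : clear implicits. Arguments phi : clear implicits.
Hypothesis Hemb : forall n, is_structure_map (emb n).
Hypothesis HRhom : forall m n (A : 'M[k]_(m, n)),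
  [/\ Rmap A 1 = 1,
      (forall x y, Rmap A (x + y) = Rmap A x + Rmap A y),
      (forall x y, Rmap A (x * y) = Rmap A x * Rmap A y) &
      (forall (a : k), Rmap A (emb n a) = emb m a)].
Hypothesis phiL : forall n (a : k) (u v : Amb k ds n), phi n (a *: u + v) = emb n a * phi n u + phi n v.
Hypothesis phiA : forall m n (A : 'M[k]_(m, n)) v, U2 n v -> phi m (tensor_act A v) = Rmap A (phi n v).
Hypothesis phigen : forall n, alg_generated (emb n) (fun y : R n => exists v, U2 n v /\ y = phi n v).

Lemma phiD n (u v : Amb k ds n) : phi n (u + v) = phi n u + phi n v.
Proof.
case: (Hemb n) => e1 _ _.
by rewrite -{1}(scale1r u) phiL e1 mul1r.
Qed.

Lemma phi0 n : phi n 0 = 0.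
Proof.
have e := @phiD n 0 0; rewrite addr0 in e.
by apply: (@addrI _ (phi n 0)); rewrite addr0 -e.
Qed.

Lemma entry_deg s N m (C : 'M[k]_(N, m)) (f : 'I_s -> 'M[k]_(N, m)) a b :
  @hdeg s k 1 (fun S => (C + \sum_(i in S) f i) a b).
Proof.
have := hdeg_add (hdeg_mono (leq0n 1) (@hdeg_const s k (C a b)))
   (hdeg_sum (fun i => hdeg_ind i (f i a b))).
apply: hdeg_ext => S; rewrite [RHS]mxE; congr (_ + _); by rewrite summxE [RHS]big_mkcond.
Qed.

Lemma deg_claim m (x : R m) : exists D, forall N s (C : 'M[k]_(N, m))
  (f : 'I_s -> 'M[k]_(N, m)),
  @hdeg s (R N) D (fun S => Rmap (C + \sum_(i in S) f i) x).
Proof.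
apply: (phigen (S := fun x : R m => exists D, forall N s (C : 'M[k]_(N, m))
  (f : 'I_s -> 'M[k]_(N, m)),
  @hdeg s (R N) D (fun S => Rmap (C + \sum_(i in S) f i) x))).
  split.
  - move=> a; exists 0%N => N s C f.
    by apply: hdeg_ext (@hdeg_const s _ (emb N a)) => S; case: (HRhom (C + \sum_(i in S) f i)).
  - move=> y z [D1 H1] [D2 H2]; exists (maxn D1 D2) => N s C f.
    have := hdeg_add (hdeg_mono (leq_maxl D1 D2) (H1 N s C f)) (hdeg_mono (leq_maxr D1 D2) (H2 N s C f)).
    by apply: hdeg_ext => S; case: (HRhom (C + \sum_(i in S) f i)) => _ ->.
  - move=> y z [D1 H1] [D2 H2]; exists (D1 + D2)%N => N s C f.
    have := hdeg_mul (H1 N s C f) (H2 N s C f).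
    by apply: hdeg_ext => S; case: (HRhom (C + \sum_(i in S) f i)) => _ _ ->.
move=> y [v [U2v ->]].
exists (\max_(i < size ds) nth 0%N ds i) => N s C f.
apply: (hdeg_ext (h := fun S => phi N (tensor_act (C + \sum_(i in S) f i) v))).
  by move=> S; rewrite phiA.
apply: hdeg_map; [exact: phi0 | exact: phiD |].
apply: hdeg_ffun => xx.
pose hh : {set 'I_s} -> k^o := fun S => \sum_(g : @tensor_idx ds m (tag xx))
        (\prod_(t < nth 0%N ds (tag xx)) (C + \sum_(i in S) f i) (tagged xx t) (g t)) *
        v (Tagged (@tensor_idx ds m) g).
apply: (hdeg_ext (h := hh)).
  by move=> S; rewrite ffunE.
apply: hdeg_sum => g.
apply: (hdeg_mono (leq_bigmax (F := fun i : 'I_(size ds) => nth 0%N ds i) (tag xx))).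
rewrite -[X in hdeg X _]addn0.
apply: hdeg_mul; last exact: hdeg_const.
apply: hdeg_prod => t; exact: entry_deg.
Qed.
End Deg.

Theorem lemma2p5 (k : fieldType) (R : nat -> comPzRingType) (emb : forall n, k -> R n)
  (Rmap : forall m n : nat, 'M[k]_(m, n) -> R n -> R m)
  (I : forall m, R m -> Prop) :
  fg_poly_alg emb Rmap ->
  colim_ideal Rmap I ->
  GL_stable Rmap I ->
  (forall m, radical (I m)) ->
  forall n : nat, ideal (proj_image Rmap I n) /\ radical (proj_image Rmap I n).
Proof.
move=> [[Hemb HR1 HRM HRhom] [ds [U1 [U2 [phi [_ [phiL _ phiA phigen]]]]]]] [Iid Icol] IGL Irad n.
have Hdeg := deg_claim Hemb HRhom phiL phiA phigen.
have E := fun y : R n => proj_imageE HR1 HRM Iid Icol IGL Hdeg y.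
case: (Iid n) => I0 ID IM.
split.
  split.
  - by apply/E.
  - by move=> y z /E Iy /E Iz; apply/E; apply: ID.
  - by move=> r y /E Iy; apply/E; apply: IM.
by move=> y e /E Iy; apply/E; apply: (Irad n y e).
Qed.
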